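(* Let $G$ be a finite solvable group, $N$ a normal subgroup of $G$, $a\in G$, and $C=\mathbf{C}_G(a)$. Write $\bar G=G/N$ and $\bar g=gN$ for $g\in G$, and set $C_N=\{g\in G\mid [a,g]\in N\}$. Then $C_N$ is a subgroup of $G$ containing $CN$, $C_N/N=\mathbf{C}_{\bar G}(\bar a)$, and $$\eta\big(\bar a^{\bar G}(\bar a^{-1})^{\bar G}\big)+\eta\big((a^{C_N}(a^{-1})^{C_N})^G\big)-1\le \eta\big(a^G(a^{-1})^G\big).$$
   Context: $x^g=g^{-1}xg$ and $[x,g]=x^{-1}g^{-1}xg$. For a subgroup $K$ and element $x$, $x^K=\{x^k\mid k\in K\}$; products of sets are $XY=\{xy\mid x\in X,y\in Y\}$; for a subset $X\subseteq G$, $X^G=\bigcup_{g\in G}X^g$ is the smallest $G$-invariant set containing $X$. For a nonempty subset $X$ of a group $L$ that is $L$-invariant, $\eta(X)$ is the number of distinct conjugacy classes of $L$ whose union is $X$ (here $\eta$ of subsets of $G$ counts $G$-classes and $\eta$ of subsets of $\bar G$ counts $\bar G$-classes). *)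

(* Defs.v *)
From mathcomp Require Import all_boot all_fingroup all_solvable.
Set Implicit Arguments. Unset Strict Implicit. Unset Printing Implicit Defensive.
Local Open Scope group_scope.

(* eta L X : the number of conjugacy classes of L contained in X.
   For a nonempty L-invariant subset X of L this is exactly the number of
   L-classes whose union is X. *)
Definition eta (gT : finGroupType) (L X : {set gT}) : nat :=
  #|[set K in classes L | K \subset X]|.

Definition CN (gT : finGroupType) (G N : {set gT}) (a : gT) : {set gT} :=
  [set g in G | [~ a, g] \in N].

(* Main.v *)
Require Import Defs.
From mathcomp Require Import all_boot all_fingroup all_solvable.
From Stdlib Require Import Lia.
From mathcomp Require Import zify.
Local Open Scope group_scope.

Section L.
Variables (gT : finGroupType) (G N : {group gT}) (a : gT).
Hypotheses (nNG : N <| G) (aG : a \in G).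

Let sGN : G \subset 'N(N) := normal_norm nNG.
Let sNG : N \subset G := normal_sub nNG.
Let inN x : x \in G -> x \in 'N(N) := fun h => subsetP sGN x h.

Lemma CN_eq : CN G N a = G :&: coset N @*^-1 'C[coset N a].
Proof.
apply/setP=> g; rewrite inE in_setI; case gG: (g \in G) => //=.
have nG := inN _ (idP gG); have nA := inN _ aG.
apply/idP/idP.
- move=> h; apply: mem_morphpre => //; apply/cent1P; apply/commute_sym/commgP.
  apply/eqP; rewrite -(morphR (coset_morphism N)) //; exact: coset_id.
- case/morphpreP=> _ /cent1P/commute_sym/commgP/eqP => h.
  apply: coset_idr; first by rewrite groupR.
  by rewrite morphR.
Qed.

Lemma Z_sub : class_support ((a ^: CN G N a) * (a^-1 ^: CN G N a)) G
              \subset ((a ^: G) * (a^-1 ^: G)) :&: N.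
Proof.
apply/subsetP=> z /imset2P[x g xX gG ->].
case/mulsgP: xX => p q /imsetP[c cC ->] /imsetP[d dC ->] ->.
move: cC dC; rewrite !inE => /andP[cG rc] /andP[dG rd].
apply/andP; split.
  by rewrite conjMg -!conjgM mem_mulg ?memJ_class ?groupM.
rewrite memJ_norm ?inN //.
rewrite conjVg !conjg_mulR invMg mulgA.
have -> : a * [~ a, c] * [~ a, d]^-1 * a^-1 = ([~ a, c] * [~ a, d]^-1) ^ a^-1.
  by rewrite conjgE invgK !mulgA.
by rewrite memJ_norm ?groupV ?inN // groupM ?groupV.
Qed.

End L.

Theorem lemma4p2 (gT : finGroupType) (G N : {group gT}) (a : gT) :
  solvable G -> N <| G -> a \in G ->
  [/\ group_set (CN G N a),
      'C_G[a] * N \subset CN G N a,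
      CN G N a / N = 'C_(G / N)[coset N a]
    & (eta (G / N) ((coset N a ^: (G / N)) * ((coset N a)^-1 ^: (G / N)))%g
      + eta G (class_support ((a ^: CN G N a) * (a^-1 ^: CN G N a))%g G)
      <= eta G ((a ^: G) * (a^-1 ^: G))%g + 1)%N].
Proof.
move=> _ nNG aG.
have sGN := normal_norm nNG; have sNG := normal_sub nNG.
have inN x : x \in G -> x \in 'N(N) := fun h => subsetP sGN x h.
have gs : group_set (CN G N a) by rewrite CN_eq // group_setI.
pose H := Group gs.
split=> //.
- rewrite -[CN G N a]/(gval H); apply: mul_subG; apply/subsetP=> g.
    case/setIP=> gG /cent1P cg; rewrite /= inE gG /=.
    by move/commute_sym/commgP/eqP: cg => ->; rewrite group1.
  move=> gN; have gG := subsetP sNG g gN; rewrite /= inE gG /=.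
  by rewrite commgEr groupM // memJ_norm ?groupV // inN.
- by rewrite CN_eq // /quotient morphim_setIpre.
set Y := (a ^: G) * (a^-1 ^: G).
set Z := class_support _ G.
set Yb := _ * _.
pose F := fun K : {set gT} => coset N @* K.
pose P := [set K in classes G | K \subset Y].
pose S := [set K : {set gT} | K \subset N].
have YG : forall y g, y \in Y -> g \in G -> y ^ g \in Y.
  move=> y g /mulsgP[p q /imsetP[u uG ->] /imsetP[v vG ->] ->] gG.
  by rewrite conjMg -!conjgM mem_mulg ?memJ_class ?groupM.
have YsG : Y \subset G.
  apply/subsetP=> y /mulsgP[p q /imsetP[u uG ->] /imsetP[v vG ->] ->].
  by rewrite groupM ?groupJ ?groupV.
have C1 : [set L in classes (G / N) | L \subset Yb] \subset F @: P.
  apply/subsetP=> L; rewrite inE => /andP[/imsetP[yb ybG ->] sL].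
  have := subsetP sL yb (class_refl _ _).
  case/mulsgP=> p q /imsetP[ub ubG ->] /imsetP[vb vbG ->] ->.
  case/morphimP: ubG => u uN uG ->.
  case/morphimP: vbG => v vN vG ->.
  have aN := inN _ aG.
  pose y := a ^ u * a^-1 ^ v.
  have yY : y \in Y by rewrite mem_mulg ?memJ_class.
  have yG := subsetP YsG y yY.
  apply/imsetP; exists (y ^: G).
    rewrite inE mem_classes //=; apply/subsetP=> z /imsetP[g gG ->].
    exact: YG.
  rewrite /F morphim_class ?inN //.
  by rewrite /y morphM ?groupJ ?groupV ?inN // !morphJ ?groupV ?inN // morphV.
have C2 : F @: (P :&: S) \subset [set 1 ^: (G / N)].
  apply/subsetP=> L /imsetP[K]; rewrite !inE => /andP[/andP[/imsetP[x xG ->] _] sK] ->.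
  rewrite /F morphim_class ?inN //.
  have -> : coset_morphism N x = 1 by apply: coset_id; exact: subsetP sK x (class_refl _ _).
  by [].
have C3 : [set K in classes G | K \subset Z] \subset P :&: S.
  apply/subsetP=> K0; rewrite !inE => /andP[-> sKZ] /=.
  have := subset_trans sKZ (@Z_sub _ G N a nNG aG); rewrite subsetI => /andP[-> ->].
  by [].
rewrite /eta.
have e1 := subset_leq_card C1.
have e3 := subset_leq_card C3.
have e2 := subset_leq_card C2; rewrite cards1 in e2.
have eP := cardsID S P.
have : #|F @: P| <= 1 + #|P :\: S|.
  rewrite -{1}(setID P S) imsetU.
  apply: leq_trans (leq_card_setU _ _) _.
  by apply: leq_add => //; apply: leq_imset_card.
rewrite -/P.
move: e1 e3 eP; rewrite -/Yb -/Z -/Y -/P.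
move=> h1 h3 hP h4.
apply: leq_trans (leq_add (leq_trans h1 h4) h3) _.
by rewrite -hP addnC addnCA add1n addn1.
Qed.
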